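(* Let $q$ be a prime power and let $a,b\in\mathbb{F}_q^{*}$ be such that the multiplicative order of $a$ divides the multiplicative order of $b$. Let $n$ be a positive integer such that $\gcd(n,q)=\gcd(n,q-1)=1$. Then the families of $a$-constacyclic and $b$-constacyclic codes of length $n$ over $\mathbb{F}_q$ are monomially equivalent.
   Context: For $c\in\mathbb{F}_q^*$, a linear code $C\subseteq\mathbb{F}_q^n$ is called $c$-constacyclic if for every codeword $(c_0,c_1,\ldots,c_{n-1})\in C$ we also have $(c\, c_{n-1},c_0,\ldots,c_{n-2})\in C$; equivalently, such codes correspond to ideals of $\mathbb{F}_q[x]/\langle x^n-c\rangle$. An isometry of linear codes is an $\mathbb{F}_q$-linear isomorphism preserving Hamming distance (equivalently, a map given by a monomial matrix). For $a,b\in\mathbb{F}_q^*$, the families of $a$-constacyclic and $b$-constacyclic codes of length $n$ over $\mathbb{F}_q$ are called monomially equivalent if there is a one-to-one correspondence between the set of $a$-constacyclic codes and the set of $b$-constacyclic codes of length $n$ given by an isometry of linear codes. *)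

(* Defs.v *)
From HB Require Import structures.
From mathcomp Require Import all_boot all_order all_algebra all_fingroup all_field.
Set Implicit Arguments. Unset Strict Implicit. Unset Printing Implicit Defensive.
Import GRing.Theory.
Local Open Scope ring_scope.

(* Linear codes of length n over F are subspaces of 'rV[F]_n. *)

(* constacyclic shift: (v_0,...,v_{n-1}) |-> (c v_{n-1}, v_0, ..., v_{n-2}) *)
Definition cshift (F : fieldType) (n : nat) (c : F) (v : 'rV[F]_n) : 'rV[F]_n :=
  \row_(i < n) (if (i : nat) == 0%N then c * v 0 (ord_pred i) else v 0 (ord_pred i)).

Definition constacyclic (F : fieldType) (n : nat) (c : F) (C : {vspace 'rV[F]_n}) : Prop :=
  forall v, v \in C -> cshift c v \in C.

Definition monomial_mx (F : fieldType) (n : nat) (M : 'M[F]_n) : Prop :=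
  exists (s : 'S_n) (d : 'I_n -> F),
    (forall i, d i != 0) /\ M = \matrix_(i, j) (if s i == j then d i else 0).

Definition code_image (F : fieldType) (n : nat) (M : 'M[F]_n) (C : {vspace 'rV[F]_n})
  : {vspace 'rV[F]_n} := (linfun (fun v : 'rV[F]_n => v *m M) @: C)%VS.

(* The families of a- and b-constacyclic codes are monomially equivalent:
   some monomial map C |-> C M restricts to a bijection between them.
   (C |-> C M is injective on subspaces, so this amounts to:
   C is a-constacyclic iff C M is b-constacyclic.) *)
Definition monomially_equivalent (F : fieldType) (n : nat) (a b : F) : Prop :=
  exists M : 'M[F]_n, monomial_mx M /\
    forall C : {vspace 'rV[F]_n}, constacyclic a C <-> constacyclic b (code_image M C).

(* Main.v *)
Require Import Defs.
From HB Require Import structures.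
From mathcomp Require Import all_boot all_order all_algebra all_fingroup all_field.
From mathcomp Require Import zify ring.
Set Implicit Arguments. Unset Strict Implicit. Unset Printing Implicit Defensive.
Import GRing.Theory.
Local Open Scope ring_scope.

Lemma nth_root_ex (F : finFieldType) (n : nat) (x : F) :
  gcdn n #|F|.-1 = 1%N -> x != 0 -> exists c : F, c ^+ n = x.
Proof.
move=> hg nx.
have q1gt0 : (0 < #|F|.-1)%N by have := finNzRing_gt1 F; case: #|F| => [|[]].
have [u _ hu] := Bezoutl n q1gt0.
rewrite gcdnC hg in hu.
have hq : forall y : F, y != 0 -> y ^+ #|F|.-1 = 1.
  move=> y ny; apply: (mulfI ny); rewrite -exprS mulr1.
  by rewrite (ltn_predK (finNzRing_gt1 F)) expf_card.
have ny : x^-1 != 0 by rewrite invr_eq0.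
exists (x^-1 ^+ u); rewrite -exprM.
have e : (1 + u * n = (1 + u * n) %/ #|F|.-1 * #|F|.-1)%N by rewrite divnK.
have : x^-1 ^+ (1 + u * n) = 1 by rewrite e mulnC exprM hq // expr1n.
rewrite exprD expr1 => h.
by rewrite -[LHS](mulKf ny) h mulr1 invrK.
Qed.

Lemma ord_pred_val n (i : 'I_n) :
  (val (ord_pred i) = if val i == 0%N then n.-1 else (val i).-1)%N.
Proof.
rewrite /=; have := ltn_ord i; case: eqP => [->|h] lt.
  by rewrite add0n modn_small // prednK.
have -> : ((i + n).-1 = (i.-1) + n)%N by lia.
by rewrite modnDr modn_small //; lia.
Qed.

Theorem corollary3p2 (F : finFieldType) (a b : {unit F}) (n : nat) :
  (#[a]%g %| #[b]%g)%N ->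
  (0 < n)%N ->
  gcdn n #|F| = 1%N ->
  gcdn n #|F|.-1 = 1%N ->
  monomially_equivalent n (val a) (val b).
Proof.
move=> _ n0 _ hg.
have na : val a != 0 by rewrite -unitfE (valP a).
have nb : val b != 0 by rewrite -unitfE (valP b).
have [l hl] : exists l : F, l ^+ n = val a / val b.
  by apply: nth_root_ex => //; rewrite mulf_neq0 // invr_eq0.
have nl : l != 0.
  apply/negP => /eqP l0; move: hl; rewrite l0 expr0n -(prednK n0) /= => /esym/eqP.
  by rewrite mulf_eq0 invr_eq0 (negPf na) (negPf nb).
pose M : 'M[F]_n := diag_mx (\row_(j < n) l ^+ j).
have Mu : M \in unitmx.
  rewrite unitmxE det_diag unitfE; apply/prodf_neq0 => i _.
  by rewrite mxE expf_neq0.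
have Mv : forall v : 'rV[F]_n, forall j, (v *m M) 0 j = v 0 j * l ^+ j.
  by move=> v j; rewrite mul_mx_diag !mxE.
have key : forall v : 'rV[F]_n,
    cshift (val b) (v *m M) = l^-1 *: (cshift (val a) v *m M).
  move=> v; apply/matrixP => i j; rewrite (ord1 i) [LHS]mxE [RHS]mxE !Mv [cshift _ _ _ _]mxE /=.
  have hp := ord_pred_val j; rewrite /= in hp; rewrite hp.
  case: eqP => hj.
  - have hn : n = (n.-1).+1 by rewrite prednK.
    have -> : FinRing.uval a = FinRing.uval b * l ^+ n by rewrite hl mulrC mulfVK.
    have -> : l ^+ n = l * l ^+ n.-1 by rewrite -exprS prednK.
    rewrite hj expr0. field; exact: nl.
  - have hi : (nat_of_ord j = (nat_of_ord j).-1.+1)%N by lia.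
    have -> : l ^+ j = l * l ^+ (val j).-1 by rewrite -exprS -hi.
    field; exact: nl.
exists M; split.
  exists 1%g, (fun i => l ^+ i); split; first by move=> i; rewrite expf_neq0.
  apply/matrixP => i j; rewrite !mxE perm1.
  by case: eqP => [->|]; rewrite ?eqxx ?mulr1n // => /eqP/negPf ->.
have LE : forall v, linfun (fun v : 'rV[F]_n => v *m M) v = v *m M.
  move=> v; exact: (lfunE (mulmxr M) v).
move=> C; rewrite /code_image; split.
- move=> Ha w /memv_imgP [u Cu ->]; rewrite LE /= key.
  apply: memvZ; have := memv_img (linfun (fun v : 'rV[F]_n => v *m M)) (Ha u Cu).
  by rewrite LE.
- move=> Hb v Cv.
  have := Hb _ (memv_img (linfun (fun v : 'rV[F]_n => v *m M)) Cv).
  rewrite LE /= key => /(memvZ l); rewrite scalerA mulfV // scale1r.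
  case/memv_imgP => u Cu; rewrite LE /= => /(congr1 (mulmx^~ (invmx M))).
  by rewrite !mulmxK // => ->.
Qed.
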